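(* Let $a,b,c,d>0$ and let $G_B:\mathbb R^2\to\mathbb R^2$ be given by $G_B(0)=0$ and $G_B(u)=\frac{1}{|u|}\big((au_1^2+bu_2^2)u_1,\ (cu_1^2+du_2^2)u_2\big)$ for $u\neq0$. If $$\max\{a+c,b+d\}\le 2(b+c+2\sqrt{ad})\quad\text{and}\quad 2(b+c-2\sqrt{ad})\le\min\{a+c,b+d\},$$ then $G_B$ is monotone. If both inequalities are strict, then $G_B$ is $3$-monotone.
   Context: A map $F:\mathbb R^n\to\mathbb R^n$ is monotone if $(F(u)-F(v))\cdot(u-v)\ge0$ for all $u,v$; for $\alpha>0$ it is $\alpha$-monotone if there is $C>0$ with $(F(u)-F(v))\cdot(u-v)\ge C|u-v|^\alpha$ for all $u,v\in\mathbb R^n$. $|\cdot|$ is the Euclidean norm. *)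

(* Defs.v *)
From Stdlib Require Import Reals.
Open Scope R_scope.

Definition vec2 := (R * R)%type.

Definition dot2 (u v : vec2) : R := fst u * fst v + snd u * snd v.
Definition sub2 (u v : vec2) : vec2 := (fst u - fst v, snd u - snd v).
Definition norm2 (u : vec2) : R := sqrt (fst u ^ 2 + snd u ^ 2).

(* real power x^a for x >= 0, with the convention 0^a = 0 (a > 0) *)
Definition rpow (x a : R) : R := if Req_EM_T x 0 then 0 else Rpower x a.

Definition monotone2 (F : vec2 -> vec2) : Prop :=
  forall u v : vec2, 0 <= dot2 (sub2 (F u) (F v)) (sub2 u v).

Definition alpha_monotone2 (alpha : R) (F : vec2 -> vec2) : Prop :=
  exists C : R, 0 < C /\
    forall u v : vec2, C * rpow (norm2 (sub2 u v)) alpha <= dot2 (sub2 (F u) (F v)) (sub2 u v).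

Definition G_B (a b c d : R) (u : vec2) : vec2 :=
  if Req_EM_T (norm2 u) 0 then (0, 0)
  else ( (a * fst u ^ 2 + b * snd u ^ 2) * fst u / norm2 u,
         (c * fst u ^ 2 + d * snd u ^ 2) * snd u / norm2 u ).

(* Main.v *)
Require Import Defs.
From Stdlib Require Import Reals Lra Psatz.
From Coquelicot Require Import Coquelicot.
Open Scope R_scope.

Definition Qf (a b c d x y p q : R) := (2*a*x^4+3*a*x^2*y^2+b*y^4)*p^2 + x*y*((2*b+c-a)*x^2+(b+2*c-d)*y^2)*p*q + (c*x^4+3*d*x^2*y^2+2*d*y^4)*q^2.

Lemma alg_bound a b c d x y p q :
  0 < a -> 0 < b -> 0 < c -> 0 < d ->
  (2*b+c-a)^2 <= 16*(a*d) -> (b+2*c-d)^2 <= 16*(a*d) ->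
  0 < x^2+y^2 ->
  Rmin (a*c) (b*d) * (x^2+y^2)^2*(p^2+q^2) <= 4*(5*a+b+c+5*d) * Qf a b c d x y p q.
Proof.
  intros ha hb hc hd hal hbe hr.
  set (m := Rmin (a*c) (b*d)).
  assert (hm1 : m <= a*c) by apply Rmin_l.
  assert (hm2 : m <= b*d) by apply Rmin_r.
  assert (hm0 : 0 < m) by (unfold m; apply Rmin_glb_lt; nra).
  set (X := x^2). set (Y := y^2).
  assert (hX : 0 <= X) by (unfold X; nra).
  assert (hY : 0 <= Y) by (unfold Y; nra).
  set (al := 2*b+c-a) in *. set (be := b+2*c-d) in *.
  set (A := 2*a*X^2+3*a*X*Y+b*Y^2).
  set (C := c*X^2+3*d*X*Y+2*d*Y^2).
  set (B := x*y*(al*X+be*Y)).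
  assert (hQ : Qf a b c d x y p q = A*p^2 + B*p*q + C*q^2) by (unfold Qf, A, B, C, X, Y, al, be; ring).
  assert (hD0 : 4*A*C - B^2 = 8*a*c*X^4 + 8*b*d*Y^4 + X*Y*((24*a*d+12*a*c-al^2)*X^2 + (52*a*d+4*b*c-2*al*be)*X*Y + (24*a*d+12*b*d-be^2)*Y^2)).
  { unfold A, B, C, X, Y; ring. }
  assert (hac : 0 < a*c) by nra. assert (hbd : 0 < b*d) by nra. assert (had : 0 < a*d) by nra. assert (hbc : 0 < b*c) by nra.
  assert (hc1 : 0 <= 24*a*d+12*a*c-al^2) by lra.
  assert (hc3 : 0 <= 24*a*d+12*b*d-be^2) by lra.
  assert (hab2 : 2*al*be <= al^2 + be^2) by (pose proof (pow2_ge_0 (al-be)); nra).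
  assert (hc2 : 0 <= 52*a*d+4*b*c-2*al*be) by lra.
  assert (hbr : 0 <= (24*a*d+12*a*c-al^2)*X^2 + (52*a*d+4*b*c-2*al*be)*X*Y + (24*a*d+12*b*d-be^2)*Y^2).
  { assert (0 <= X*Y) by nra. assert (0 <= X^2) by nra. assert (0 <= Y^2) by nra. nra. }
  assert (hXY : 0 <= X*Y) by nra.
  assert (hX4 : 0 <= X^4) by nra. assert (hY4 : 0 <= Y^4) by nra.
  assert (hpm : (X+Y)^4 <= 8*(X^4+Y^4)).
  { clearbody X Y. assert (h1 : (X+Y)^2 <= 2*(X^2+Y^2)) by (pose proof (pow2_ge_0 (X-Y)); nra).
    assert (h2 : (X^2+Y^2)^2 <= 2*(X^4+Y^4)) by (pose proof (pow2_ge_0 (X^2-Y^2)); nra).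
    assert (0 <= (X+Y)^2) by nra.
    replace ((X+Y)^4) with ((X+Y)^2*(X+Y)^2) by ring. nra. }
  assert (hD : m*(X+Y)^4 <= 4*A*C - B^2).
  { rewrite hD0. assert (0 <= X*Y*((24*a*d+12*a*c-al^2)*X^2 + (52*a*d+4*b*c-2*al*be)*X*Y + (24*a*d+12*b*d-be^2)*Y^2)) by (apply Rmult_le_pos; auto).
    nra. }
  assert (hA : 4*A*(A*p^2 + B*p*q + C*q^2) = (2*A*p+B*q)^2 + (4*A*C-B^2)*q^2) by ring.
  assert (hC : 4*C*(A*p^2 + B*p*q + C*q^2) = (2*C*q+B*p)^2 + (4*A*C-B^2)*p^2) by ring.
  rewrite hQ. set (Q := A*p^2 + B*p*q + C*q^2) in *.
  assert (hpos : 0 < X + Y) by (unfold X, Y; lra).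
  assert (hm4 : 0 < m*(X+Y)^4) by (apply Rmult_lt_0_compat; auto; apply pow_lt; auto).
  assert (hsum : m*(X+Y)^4*(p^2+q^2) <= 4*(A+C)*Q).
  { pose proof (pow2_ge_0 (2*A*p+B*q)). pose proof (pow2_ge_0 (2*C*q+B*p)).
    pose proof (pow2_ge_0 p). pose proof (pow2_ge_0 q).
    assert (e : 4*(A+C)*Q = (2*A*p+B*q)^2 + (2*C*q+B*p)^2 + (4*A*C-B^2)*(p^2+q^2)) by lra.
    rewrite e. assert (m*(X+Y)^4*(p^2+q^2) <= (4*A*C-B^2)*(p^2+q^2)) by (apply Rmult_le_compat_r; lra). lra. }
  assert (hAC : 0 < A + C).
  { unfold A, C. clearbody X Y.
    assert (e : 2*a*X^2+3*a*X*Y+b*Y^2 + (c*X^2+3*d*X*Y+2*d*Y^2) = (2*a+c)*(X*X) + (3*a+3*d)*(X*Y) + (b+2*d)*(Y*Y)) by ring.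
    rewrite e.
    assert (0 <= (3*a+3*d)*(X*Y)) by (apply Rmult_le_pos; lra).
    assert (0 <= (2*a+c)*(X*X)) by (apply Rmult_le_pos; nra).
    assert (0 <= (b+2*d)*(Y*Y)) by (apply Rmult_le_pos; nra).
    destruct (Rlt_or_le 0 X).
    - assert (0 < (2*a+c)*(X*X)) by (apply Rmult_lt_0_compat; nra). lra.
    - assert (0 < Y) by lra. assert (0 < (b+2*d)*(Y*Y)) by (apply Rmult_lt_0_compat; nra). lra. }
  assert (hQ0 : 0 <= Q).
  { assert (0 <= m*(X+Y)^4*(p^2+q^2)) by (apply Rmult_le_pos; [lra| pose proof (pow2_ge_0 p); pose proof (pow2_ge_0 q); lra]).
    assert (0 <= 4*(A+C)*Q) by lra. clearbody Q A C. nra. }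
  assert (hACM : A + C <= (5*a+b+c+5*d)*(X+Y)^2).
  { unfold A, C. clearbody X Y.
    assert (e : (5*a+b+c+5*d)*(X+Y)^2 - (2*a*X^2+3*a*X*Y+b*Y^2 + (c*X^2+3*d*X*Y+2*d*Y^2)) = (3*a+b+5*d)*(X*X) + (7*a+2*b+2*c+7*d)*(X*Y) + (5*a+c+3*d)*(Y*Y)) by ring.
    assert (0 <= (7*a+2*b+2*c+7*d)*(X*Y)) by (apply Rmult_le_pos; lra).
    assert (0 <= (3*a+b+5*d)*(X*X)) by (apply Rmult_le_pos; nra).
    assert (0 <= (5*a+c+3*d)*(Y*Y)) by (apply Rmult_le_pos; nra). lra. }
  assert (h2 : m*(X+Y)^4*(p^2+q^2) <= 4*(5*a+b+c+5*d)*(X+Y)^2 * Q).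
  { assert (4*(A+C)*Q <= 4*((5*a+b+c+5*d)*(X+Y)^2)*Q) by (apply Rmult_le_compat_r; lra). lra. }
  assert (h3 : (X+Y)^2 * (m*(X+Y)^2*(p^2+q^2)) <= (X+Y)^2 * (4*(5*a+b+c+5*d)*Q)).
  { replace ((X+Y)^2 * (m*(X+Y)^2*(p^2+q^2))) with (m*(X+Y)^4*(p^2+q^2)) by ring. lra. }
  apply Rmult_le_reg_l in h3; [|apply pow_lt; lra].
  replace (x^2+y^2) with (X+Y) by reflexivity. exact h3.
Qed.

Definition Pf (a b c d x y p q : R) := (a*x^2+b*y^2)*x*p + (c*x^2+d*y^2)*y*q.
Definition hJh (a b c d x y p q : R) := (3*a*x^2+b*y^2)*p^2 + 2*(b+c)*x*y*p*q + (c*x^2+3*d*y^2)*q^2.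
Definition phi0 a b c d v1 v2 h1 h2 t :=
  Pf a b c d (v1+t*h1) (v2+t*h2) h1 h2 / sqrt ((v1+t*h1)^2 + (v2+t*h2)^2).
Definition Dphi a b c d v1 v2 h1 h2 t :=
  let x := v1+t*h1 in let y := v2+t*h2 in let S := sqrt (x^2+y^2) in
  (S*S*hJh a b c d x y h1 h2 - Pf a b c d x y h1 h2 * (x*h1+y*h2)) / (S*S*S).

Lemma phi0_der a b c d v1 v2 h1 h2 t :
  0 < (v1+t*h1)^2 + (v2+t*h2)^2 ->
  derivable_pt_lim (phi0 a b c d v1 v2 h1 h2) t (Dphi a b c d v1 v2 h1 h2 t).
Proof.
  intros hq. apply is_derive_Reals. unfold phi0, Dphi, Pf, hJh.
  auto_derive.
  - repeat split; try nra. apply Rgt_not_eq, sqrt_lt_R0. nra.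
  - assert (hS : sqrt ((v1 + t * h1) ^ 2 + (v2 + t * h2) ^ 2) <> 0) by (apply Rgt_not_eq, sqrt_lt_R0; nra).
    simpl. simpl in hS. 
    set (S := sqrt _) in *. field. auto.
Qed.

Section S.
Variables a b c d : R.
Hypotheses (ha : 0 < a) (hb : 0 < b) (hc : 0 < c) (hd : 0 < d).
Hypotheses (hal : (2*b+c-a)^2 <= 16*(a*d)) (hbe : (b+2*c-d)^2 <= 16*(a*d)).
Let m := Rmin (a*c) (b*d).
Let M := 5*a+b+c+5*d.

Lemma m_pos : 0 < m.
Proof. unfold m; apply Rmin_glb_lt; nra. Qed.
Lemma M_pos : 0 < M.
Proof. unfold M; lra. Qed.

Lemma Dphi_bound v1 v2 h1 h2 t :
  0 < (v1+t*h1)^2 + (v2+t*h2)^2 ->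
  m * sqrt ((v1+t*h1)^2 + (v2+t*h2)^2) * (h1^2+h2^2) <= 4*M * Dphi a b c d v1 v2 h1 h2 t.
Proof.
  intros hq. unfold Dphi; cbv zeta.
  set (x := v1+t*h1) in *. set (y := v2+t*h2) in *.
  set (q := x^2+y^2) in *.
  assert (hSS : sqrt q * sqrt q = q) by (apply sqrt_sqrt; lra).
  assert (hS : 0 < sqrt q) by (apply sqrt_lt_R0; lra).
  set (S := sqrt q) in *.
  rewrite hSS.
  assert (e : q * hJh a b c d x y h1 h2 - Pf a b c d x y h1 h2 * (x*h1+y*h2) = Qf a b c d x y h1 h2).
  { unfold q, hJh, Pf, Qf; ring. }
  rewrite e.
  pose proof (alg_bound a b c d x y h1 h2 ha hb hc hd hal hbe hq) as hk.
  fold m in hk. fold q in hk. fold M in hk.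
  apply Rmult_le_reg_r with (q*S).
  { apply Rmult_lt_0_compat; lra. }
  replace (4 * M * (Qf a b c d x y h1 h2 / (q * S)) * (q * S)) with (4*M*Qf a b c d x y h1 h2) by (field; lra).
  replace (m * S * (h1 ^ 2 + h2 ^ 2) * (q * S)) with (m * q ^ 2 * (h1 ^ 2 + h2 ^ 2)) by (rewrite <- hSS; ring).
  lra.
Qed.

Lemma seg_incr v1 v2 h1 h2 al be L :
  (forall t, 0 < (v1+t*h1)^2 + (v2+t*h2)^2) -> al < be ->
  (forall t, al <= t <= be -> L <= Dphi a b c d v1 v2 h1 h2 t) ->
  L*(be-al) <= phi0 a b c d v1 v2 h1 h2 be - phi0 a b c d v1 v2 h1 h2 al.
Proof.
  intros hq hab hL.
  destruct (MVT_cor2 (phi0 a b c d v1 v2 h1 h2) (Dphi a b c d v1 v2 h1 h2) al be hab)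
    as [c0 [e hc0]].
  { intros t _. apply phi0_der. apply hq. }
  rewrite e. apply Rmult_le_compat_r; [lra|]. apply hL; lra.
Qed.

Lemma noncol v1 v2 h1 h2 :
  0 < h1^2+h2^2 -> v1*h2 - v2*h1 <> 0 ->
  m/(64*M) * (sqrt (h1^2+h2^2))^3 <= phi0 a b c d v1 v2 h1 h2 1 - phi0 a b c d v1 v2 h1 h2 0.
Proof.
  intros hH hx.
  set (H := h1^2+h2^2) in *.
  set (k := v1*h1+v2*h2).
  assert (lag : forall t, ((v1+t*h1)^2 + (v2+t*h2)^2) * H = (k + t*H)^2 + (v1*h2-v2*h1)^2).
  { intro t. unfold k, H. ring. }
  assert (hcr : 0 < (v1*h2-v2*h1)^2) by (apply pow2_gt_0 ; auto).
  assert (hq : forall t, 0 < (v1+t*h1)^2 + (v2+t*h2)^2).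
  { intro t. pose proof (lag t). pose proof (pow2_ge_0 (k+t*H)). 
    assert (0 < ((v1+t*h1)^2 + (v2+t*h2)^2) * H) by lra.
    pose proof (pow2_ge_0 (v1+t*h1)). pose proof (pow2_ge_0 (v2+t*h2)). nra. }
  pose proof m_pos as hm. pose proof M_pos as hM.
  assert (hD0 : forall t, 0 <= Dphi a b c d v1 v2 h1 h2 t).
  { intro t. pose proof (Dphi_bound v1 v2 h1 h2 t (hq t)).
    assert (0 <= m * sqrt ((v1+t*h1)^2 + (v2+t*h2)^2) * H).
    { apply Rmult_le_pos; [apply Rmult_le_pos; [lra| apply sqrt_pos]|lra]. }
    fold H in H0. nra. }
  set (rho := sqrt H).
  assert (hrho : 0 < rho) by (apply sqrt_lt_R0; lra).
  assert (hrr : rho * rho = H) by (apply sqrt_sqrt; lra).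
  assert (hlow : forall t, H/4 <= Rabs (k + t*H) -> m*rho*H/(16*M) <= Dphi a b c d v1 v2 h1 h2 t).
  { intros t ht.
    pose proof (Dphi_bound v1 v2 h1 h2 t (hq t)) as hb0. fold H in hb0.
    set (S := sqrt ((v1+t*h1)^2 + (v2+t*h2)^2)) in *.
    assert (hSS : S*S = (v1+t*h1)^2 + (v2+t*h2)^2) by (apply sqrt_sqrt; pose proof (hq t); lra).
    assert (hS0 : 0 <= S) by apply sqrt_pos.
    assert (hk2 : H*H/16 <= (k+t*H)^2).
    { assert (0 <= H/4) by lra.
      rewrite <- pow2_abs. assert (H/4*(H/4) <= Rabs (k+t*H) * Rabs (k+t*H)) by (apply Rmult_le_compat; lra).
      lra. }
    pose proof (lag t) as lt. rewrite <- hSS in lt.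
    assert (hS2 : H/16 <= S*S).
    { apply Rmult_le_reg_r with H; [lra|]. nra. }
    assert (hS : rho/4 <= S) by nra.
    assert (m*(rho/4)*H <= m*S*H).
    { apply Rmult_le_compat_r; [lra|]. apply Rmult_le_compat_l; lra. }
    apply Rmult_le_reg_l with (4*M); [lra|].
    replace (4*M*(m*rho*H/(16*M))) with (m*(rho/4)*H) by (field; lra). lra. }
  replace (rho^3) with (rho*H) by (rewrite <- hrr; ring).
  destruct (Rle_or_lt 0 (k + H/2)) as [hk|hk].
  - assert (h1' : 0*(3/4-0) <= phi0 a b c d v1 v2 h1 h2 (3/4) - phi0 a b c d v1 v2 h1 h2 0).
    { apply seg_incr; [exact hq|lra|]. intros. apply hD0. }
    assert (h2' : m*rho*H/(16*M) * (1-3/4) <= phi0 a b c d v1 v2 h1 h2 1 - phi0 a b c d v1 v2 h1 h2 (3/4)).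
    { apply seg_incr; [exact hq|lra|]. intros t ht. apply hlow.
      rewrite Rabs_right; [|nra]. nra. }
    replace (m / (64 * M) * (rho * H)) with (m*rho*H/(16*M) * (1-3/4)) by (field; lra). lra.
  - assert (h1' : 0*(1-1/4) <= phi0 a b c d v1 v2 h1 h2 1 - phi0 a b c d v1 v2 h1 h2 (1/4)).
    { apply seg_incr; [exact hq|lra|]. intros. apply hD0. }
    assert (h2' : m*rho*H/(16*M) * (1/4-0) <= phi0 a b c d v1 v2 h1 h2 (1/4) - phi0 a b c d v1 v2 h1 h2 0).
    { apply seg_incr; [exact hq|lra|]. intros t ht. apply hlow.
      rewrite Rabs_left; [|nra]. nra. }
    replace (m / (64 * M) * (rho * H)) with (m*rho*H/(16*M) * (1/4-0)) by (field; lra). lra.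
Qed.

End S.

Lemma dotG a b c d x y p q : 0 < x^2+y^2 ->
  dot2 (G_B a b c d (x,y)) (p,q) = Pf a b c d x y p q / sqrt (x^2+y^2).
Proof.
  intros hq. unfold G_B, norm2, dot2, Pf; cbn [fst snd].
  assert (hS : 0 < sqrt (x^2+y^2)) by (apply sqrt_lt_R0; lra).
  destruct (Req_EM_T (sqrt (x ^ 2 + y ^ 2)) 0) as [e|n]; [lra|].
  cbn [fst snd]. field. lra.
Qed.

Lemma Gscal a b c d mu h1 h2 : 0 < h1^2+h2^2 ->
  dot2 (G_B a b c d (mu*h1, mu*h2)) (h1,h2) = mu * Rabs mu * Pf a b c d h1 h2 h1 h2 / sqrt (h1^2+h2^2).
Proof.
  intros hH. unfold G_B, norm2, dot2, Pf; cbn [fst snd].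
  assert (hS : 0 < sqrt (h1^2+h2^2)) by (apply sqrt_lt_R0; lra).
  assert (e1 : (mu*h1)^2 + (mu*h2)^2 = Rsqr mu * (h1^2+h2^2)) by (unfold Rsqr; ring).
  rewrite e1, sqrt_mult, sqrt_Rsqr_abs; [| apply Rle_0_sqr | lra].
  destruct (Req_EM_T (Rabs mu * sqrt (h1 ^ 2 + h2 ^ 2)) 0) as [e|n].
  - assert (Rabs mu = 0).
    { destruct (Rmult_integral _ _ e); auto. lra. }
    assert (mu = 0) by (destruct (Rcase_abs mu); [rewrite Rabs_left in H; lra | rewrite Rabs_right in H; lra]).
    subst mu. cbn [fst snd]. field. lra.
  - assert (Rabs mu <> 0) by (intro z; apply n; rewrite z; ring).
    cbn [fst snd]. destruct (Rcase_abs mu) as [hm|hm].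
    + rewrite Rabs_left in *; auto. field. split; lra.
    + rewrite Rabs_right in *; auto. field. split; lra.
Qed.

Lemma sqdiff l : 1/2 <= (l+1)*Rabs (l+1) - l*Rabs l.
Proof.
  pose proof (pow2_ge_0 (2*l+1)).
  destruct (Rcase_abs (l+1)) as [h1|h1]; [rewrite (Rabs_left (l+1)) by lra | rewrite (Rabs_right (l+1)) by lra];
  (destruct (Rcase_abs l) as [h2|h2]; [rewrite (Rabs_left l) by lra | rewrite (Rabs_right l) by lra]); nra.
Qed.

Lemma col a b c d u1 u2 v1 v2 : 0 < a -> 0 < b -> 0 < c -> 0 < d ->
  0 < (u1-v1)^2+(u2-v2)^2 -> v1*(u2-v2) - v2*(u1-v1) = 0 ->
  Rmin a d / 4 * (sqrt ((u1-v1)^2+(u2-v2)^2))^3 <=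
  dot2 (G_B a b c d (u1,u2)) (u1-v1,u2-v2) - dot2 (G_B a b c d (v1,v2)) (u1-v1,u2-v2).
Proof.
  intros ha hb hc hd hH hx.
  set (h1 := u1 - v1) in *. set (h2 := u2 - v2) in *.
  set (H := h1^2+h2^2) in *.
  set (l := (v1*h1+v2*h2)/H).
  assert (ev1 : v1 = l*h1).
  { unfold l. apply Rminus_diag_uniq.
    replace (v1 - (v1*h1+v2*h2)/H*h1) with (h2*(v1*h2 - v2*h1)/H) by (unfold H in *; field; lra).
    rewrite hx. field. lra. }
  assert (ev2 : v2 = l*h2).
  { unfold l. apply Rminus_diag_uniq.
    replace (v2 - (v1*h1+v2*h2)/H*h2) with (-h1*(v1*h2 - v2*h1)/H) by (unfold H in *; field; lra).
    rewrite hx. field. lra. }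
  assert (eu1 : u1 = (l+1)*h1) by (unfold h1 in *; lra).
  assert (eu2 : u2 = (l+1)*h2) by (unfold h1, h2 in *; lra).
  assert (hp : (u1, u2) = ((l+1)*h1, (l+1)*h2)) by (rewrite eu1, eu2 at 1; reflexivity).
  assert (hv : (v1, v2) = (l*h1, l*h2)) by (rewrite ev1, ev2 at 1; reflexivity).
  rewrite hp, hv. rewrite !Gscal by exact hH. fold H.
  set (rho := sqrt H).
  assert (hrho : 0 < rho) by (apply sqrt_lt_R0; lra).
  assert (hrr : rho * rho = H) by (apply sqrt_sqrt; lra).
  assert (hP : Rmin a d * H^2 / 2 <= Pf a b c d h1 h2 h1 h2).
  { unfold Pf, H.
    assert (Rmin a d <= a) by apply Rmin_l. assert (Rmin a d <= d) by apply Rmin_r.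
    assert (0 < Rmin a d) by (apply Rmin_glb_lt; lra).
    pose proof (pow2_ge_0 (h1^2-h2^2)). pose proof (pow2_ge_0 h1). pose proof (pow2_ge_0 h2).
    assert (0 <= (b+c)*(h1^2*h2^2)) by (apply Rmult_le_pos; nra).
    assert (Rmin a d * (h1^4) <= a * h1^4) by (apply Rmult_le_compat_r; nra).
    assert (Rmin a d * (h2^4) <= d * h2^4) by (apply Rmult_le_compat_r; nra).
    assert (hq2 : (h1^2+h2^2)^2 <= 2*(h1^4+h2^4)) by nra.
    assert (Rmin a d * (h1^2+h2^2)^2 <= Rmin a d * (2*(h1^4+h2^4))) by (apply Rmult_le_compat_l; lra).
    lra. }
  pose proof (sqdiff l) as hs.
  assert (0 < Rmin a d) by (apply Rmin_glb_lt; lra).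
  assert (e : (l + 1) * Rabs (l + 1) * Pf a b c d h1 h2 h1 h2 / rho - l * Rabs l * Pf a b c d h1 h2 h1 h2 / rho
            = ((l + 1) * Rabs (l + 1) - l * Rabs l) * Pf a b c d h1 h2 h1 h2 / rho) by (field; lra).
  rewrite e.
  apply Rmult_le_reg_r with rho; [lra|].
  replace (((l + 1) * Rabs (l + 1) - l * Rabs l) * Pf a b c d h1 h2 h1 h2 / rho * rho) with
    (((l + 1) * Rabs (l + 1) - l * Rabs l) * Pf a b c d h1 h2 h1 h2) by (field; lra).
  replace (Rmin a d / 4 * rho ^ 3 * rho) with (1/2 * (Rmin a d * H^2/2)) by (rewrite <- hrr; field).
  assert (0 <= Rmin a d * H^2/2) by (assert (0 <= H^2) by nra; nra).
  apply Rmult_le_compat; lra.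
Qed.

Lemma key a b c d : 0 < a -> 0 < b -> 0 < c -> 0 < d ->
  (2*b+c-a)^2 <= 16*(a*d) -> (b+2*c-d)^2 <= 16*(a*d) ->
  alpha_monotone2 3 (G_B a b c d).
Proof.
  intros ha hb hc hd hal hbe.
  set (m := Rmin (a*c) (b*d)). set (M := 5*a+b+c+5*d).
  assert (hm : 0 < m) by (unfold m; apply Rmin_glb_lt; nra).
  assert (hM : 0 < M) by (unfold M; lra).
  assert (had : 0 < Rmin a d) by (apply Rmin_glb_lt; lra).
  exists (Rmin (m/(64*M)) (Rmin a d/4)). split.
  { apply Rmin_glb_lt; [apply Rdiv_lt_0_compat|]; lra. }
  intros [u1 u2] [v1 v2].
  assert (edot : dot2 (sub2 (G_B a b c d (u1,u2)) (G_B a b c d (v1,v2))) (sub2 (u1,u2) (v1,v2))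
     = dot2 (G_B a b c d (u1,u2)) (u1-v1,u2-v2) - dot2 (G_B a b c d (v1,v2)) (u1-v1,u2-v2))
    by (unfold dot2, sub2; cbn [fst snd]; ring).
  rewrite edot.
  change (norm2 (sub2 (u1, u2) (v1, v2))) with (sqrt ((u1-v1)^2+(u2-v2)^2)).
  destruct (Req_dec ((u1-v1)^2+(u2-v2)^2) 0) as [h0|hH].
  - pose proof (pow2_ge_0 (u1-v1)); pose proof (pow2_ge_0 (u2-v2)).
    assert (e1 : u1 - v1 = 0) by (apply Rsqr_0_uniq; unfold Rsqr; lra). assert (e2 : u2 - v2 = 0) by (apply Rsqr_0_uniq; unfold Rsqr; lra).
    rewrite h0, sqrt_0. unfold rpow. destruct (Req_EM_T 0 0) as [_|n]; [|lra].
    unfold dot2; cbn [fst snd]. rewrite e1, e2. lra.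
  - assert (hH' : 0 < (u1-v1)^2+(u2-v2)^2) by (pose proof (pow2_ge_0 (u1-v1)); pose proof (pow2_ge_0 (u2-v2)); lra).
    assert (hrho : 0 < sqrt ((u1-v1)^2+(u2-v2)^2)) by (apply sqrt_lt_R0; lra).
    assert (er : rpow (sqrt ((u1-v1)^2+(u2-v2)^2)) 3 = (sqrt ((u1-v1)^2+(u2-v2)^2))^3).
    { unfold rpow. destruct (Req_EM_T _ 0) as [e|_]; [lra|].
      replace 3 with (INR 3) at 1 by (simpl; ring). apply Rpower_pow; lra. }
    rewrite er.
    assert (hr3 : 0 <= (sqrt ((u1-v1)^2+(u2-v2)^2))^3) by (apply pow_le; lra).
    destruct (Req_dec (v1*(u2-v2) - v2*(u1-v1)) 0) as [hx|hx].
    + pose proof (col a b c d u1 u2 v1 v2 ha hb hc hd hH' hx).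
      assert (Rmin (m/(64*M)) (Rmin a d/4) * (sqrt ((u1-v1)^2+(u2-v2)^2))^3 <= Rmin a d/4 * (sqrt ((u1-v1)^2+(u2-v2)^2))^3)
        by (apply Rmult_le_compat_r; [lra| apply Rmin_r]).
      lra.
    + pose proof (noncol a b c d ha hb hc hd hal hbe v1 v2 (u1-v1) (u2-v2) hH' hx) as hn.
      fold m M in hn.
      assert (e1 : phi0 a b c d v1 v2 (u1-v1) (u2-v2) 1 = dot2 (G_B a b c d (u1,u2)) (u1-v1,u2-v2)).
      { assert (hu : 0 < u1^2+u2^2).
        { destruct (Req_dec (u1^2+u2^2) 0) as [z|z]; [|pose proof (pow2_ge_0 u1); pose proof (pow2_ge_0 u2); lra].
          exfalso. apply hx. pose proof (pow2_ge_0 u1); pose proof (pow2_ge_0 u2).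
          assert (u1 = 0) by (apply Rsqr_0_uniq; unfold Rsqr; lra). assert (u2 = 0) by (apply Rsqr_0_uniq; unfold Rsqr; lra). subst. ring. }
        rewrite dotG by lra. unfold phi0.
        replace (v1 + 1*(u1-v1)) with u1 by ring. replace (v2 + 1*(u2-v2)) with u2 by ring. reflexivity. }
      assert (e0 : phi0 a b c d v1 v2 (u1-v1) (u2-v2) 0 = dot2 (G_B a b c d (v1,v2)) (u1-v1,u2-v2)).
      { assert (hv : 0 < v1^2+v2^2).
        { destruct (Req_dec (v1^2+v2^2) 0) as [z|z]; [|pose proof (pow2_ge_0 v1); pose proof (pow2_ge_0 v2); lra].
          exfalso. apply hx. pose proof (pow2_ge_0 v1); pose proof (pow2_ge_0 v2).
          assert (v1 = 0) by (apply Rsqr_0_uniq; unfold Rsqr; lra). assert (v2 = 0) by (apply Rsqr_0_uniq; unfold Rsqr; lra). subst. ring. }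
        rewrite dotG by lra. unfold phi0.
        replace (v1 + 0*(u1-v1)) with v1 by ring. replace (v2 + 0*(u2-v2)) with v2 by ring. reflexivity. }
      rewrite <- e1, <- e0.
      assert (Rmin (m/(64*M)) (Rmin a d/4) * (sqrt ((u1-v1)^2+(u2-v2)^2))^3 <= m/(64*M) * (sqrt ((u1-v1)^2+(u2-v2)^2))^3)
        by (apply Rmult_le_compat_r; [lra| apply Rmin_l]).
      lra.
Qed.

Lemma conds a b c d : 0 < a -> 0 < d ->
  Rmax (a + c) (b + d) <= 2 * (b + c + 2 * sqrt (a * d)) ->
  2 * (b + c - 2 * sqrt (a * d)) <= Rmin (a + c) (b + d) ->
  (2*b+c-a)^2 <= 16*(a*d) /\ (b+2*c-d)^2 <= 16*(a*d).
Proof.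
  intros ha hd h1 h2.
  pose proof (Rmax_l (a+c) (b+d)). pose proof (Rmax_r (a+c) (b+d)).
  pose proof (Rmin_l (a+c) (b+d)). pose proof (Rmin_r (a+c) (b+d)).
  assert (hs : sqrt (a*d) * sqrt (a*d) = a*d) by (apply sqrt_sqrt; nra).
  pose proof (sqrt_pos (a*d)).
  set (s := sqrt (a*d)) in *.
  split.
  - assert (0 <= (4*s - (2*b+c-a))*(4*s + (2*b+c-a))) by (apply Rmult_le_pos; lra). nra.
  - assert (0 <= (4*s - (b+2*c-d))*(4*s + (b+2*c-d))) by (apply Rmult_le_pos; lra). nra.
Qed.

Theorem mainTheorem3 (a b c d : R) (ha : 0 < a) (hb : 0 < b) (hc : 0 < c) (hd : 0 < d) :
  (Rmax (a + c) (b + d) <= 2 * (b + c + 2 * sqrt (a * d)) /\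
   2 * (b + c - 2 * sqrt (a * d)) <= Rmin (a + c) (b + d) ->
   monotone2 (G_B a b c d)) /\
  (Rmax (a + c) (b + d) < 2 * (b + c + 2 * sqrt (a * d)) /\
   2 * (b + c - 2 * sqrt (a * d)) < Rmin (a + c) (b + d) ->
   alpha_monotone2 3 (G_B a b c d)).
Proof.
  split.
  - intros [h1 h2]. destruct (conds a b c d ha hd h1 h2) as [hal hbe].
    destruct (key a b c d ha hb hc hd hal hbe) as [C [hC hk]].
    intros u v. specialize (hk u v).
    assert (0 <= rpow (norm2 (sub2 u v)) 3).
    { unfold rpow. destruct (Req_EM_T _ 0); [lra|]. unfold Rpower. left; apply exp_pos. }
    assert (0 <= C * rpow (norm2 (sub2 u v)) 3) by (apply Rmult_le_pos; lra). lra.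
  - intros [h1 h2]. destruct (conds a b c d ha hd) as [hal hbe]; try lra.
    exact (key a b c d ha hb hc hd hal hbe).
Qed.
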